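(* Consider the joint regression model described in the context, and let Assumptions (A1)–(A5) hold. Suppose that $(T_1,C_1)$ satisfies the model with parameter vector $(\gamma,\theta)$ and $(T_2,C_2)$ satisfies the model with parameter vector $(\gamma^*,\theta^* )$ (with the same observed covariates $(W,Z)$), and let $Y_j=\min\{T_j,C_j\}$, $\Delta_j=\mathbb{1}(T_j\le C_j)$, $j=1,2$. If $$f_{Y_1,\Delta_1\mid W,Z}(\cdot,k\mid w,z,\gamma;\theta)\equiv f_{Y_2,\Delta_2\mid W,Z}(\cdot,k\mid w,z,\gamma^*;\theta^* )$$ for $k\in\{0,1\}$ and almost every $(w,z)$, then $\gamma=\gamma^*$ and $\theta=\theta^*$.
   Context: Let $m\ge 0$ be an integer. Observed covariates are $\tilde X\in\mathbb{R}^m$, a scalar $Z$ and a scalar instrument $\tilde W$; put $X=(1,\tilde X^\top)^\top$ and $W=(X^\top,\tilde W)^\top\in\mathbb{R}^{m+2}$. Let $\Gamma$ be a parameter set and $(z,w,\gamma)\mapsto g_\gamma(z,w)\in\mathbb{R}$ a known function (the control function). The model with parameter $(\gamma,\theta)$, $\theta=(\beta_T,\alpha_T,\lambda_T,\beta_C,\alpha_C,\lambda_C,\sigma_T,\sigma_C,\rho)$ with $\beta_T,\beta_C\in\mathbb{R}^{m+1}$, $\alpha_T,\lambda_T,\alpha_C,\lambda_C\in\mathbb{R}$, $\sigma_T,\sigma_C>0$, $\rho\in(-1,1)$, is $$T=X^\top\beta_T+Z\alpha_T+V\lambda_T+\epsilon_T,\qquad C=X^\top\beta_C+Z\alpha_C+V\lambda_C+\epsilon_C,\qquad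 V=g_\gamma(Z,W),$$ where $T,C$ are the log survival and log censoring times; one observes $Y=\min\{T,C\}$, $\Delta=\mathbb{1}(T\le C)$, $W$, $Z$. The true parameter is $(\gamma^*,\theta^* )$. Assumptions: (A1) $(\epsilon_T,\epsilon_C)^\top\sim N_2\big(0,\begin{pmatrix}\sigma_T^2&\rho\sigma_T\sigma_C\\ \rho\sigma_T\sigma_C&\sigma_C^2\end{pmatrix}\big)$ with $\sigma_T,\sigma_C>0$, $|\rho|<1$; (A2) $(\epsilon_T,\epsilon_C)$ is independent of $(W,Z)$; (A3) the covariance matrix of $(\tilde X^\top,Z,V)$ is full rank and $\mathrm{Var}(\tilde W)>0$; (A4) $\mathbb{P}(Y=T\mid W,Z)>0$ and $\mathbb{P}(Y=C\mid W,Z)>0$ almost surely; (A5) the true parameter $\gamma^*$ is identified (uniquely determined by the distribution of the observed data). For $w=(x^\top,\tilde w)^\top$, $z$, $y\in\mathbb{R}$, let $b_T=y-x^\top\beta_T-z\alpha_T-g_\gamma(z,w)\lambda_T$ and $b_C=y-x^\top\beta_C-z\alpha_C-g_\gamma(z,w)\lambda_C$. The conditional sub-densities of $(Y,\Delta)$ given $(W,Z)=(w,z)$ under parameter $(\gamma,\theta)$ are $$f_{Y,\Delta\mid W,Z}(y,1\mid w,z,\gamma;\theta)=\frac1{\sigma_T}\Big[1-\Phi\Big(\frac{b_C-\rho\frac{\sigma_C}{\sigma_T}b_T}{\sigma_C(1-\rho^2)^{1/2}}\Big)\Big]\phi\Big(\frac{b_T}{\sigma_T}\Big),$$ $$f_{Y,\Delta\mid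 W,Z}(y,0\mid w,z,\gamma;\theta)=\frac1{\sigma_C}\Big[1-\Phi\Big(\frac{b_T-\rho\frac{\sigma_T}{\sigma_C}b_C}{\sigma_T(1-\rho^2)^{1/2}}\Big)\Big]\phi\Big(\frac{b_C}{\sigma_C}\Big),$$ where $\Phi,\phi$ are the standard normal distribution and density functions. *)

(* Defs.v *)
From HB Require Import structures.
From mathcomp Require Import all_boot all_order all_algebra.
From mathcomp Require Import all_classical all_reals all_analysis.
Set Implicit Arguments. Unset Strict Implicit. Unset Printing Implicit Defensive.
Import Order.TTheory GRing.Theory Num.Theory.
Local Open Scope classical_set_scope.
Local Open Scope ring_scope.

Section Model.
Variable R : realType.

Definition std_phi (x : R) : R := normal_pdf 0 1 x.
Definition std_Phi (x : R) : R := fine (normal_prob 0 1 `]-oo, x]).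

Record param (m : nat) := Param {
  betaT : 'rV[R]_m.+1; alphaT : R; lambdaT : R;
  betaC : 'rV[R]_m.+1; alphaC : R; lambdaC : R;
  sigmaT : R; sigmaC : R; rho : R }.

Definition valid_param m (th : param m) : Prop :=
  0 < sigmaT th /\ 0 < sigmaC th /\ -1 < rho th < 1.

(* for w = (x^T, w~)^T in R^(m+2), x^T beta with x the first m+1 entries of w *)
Definition xdot m (w : 'rV[R]_m.+2) (b : 'rV[R]_m.+1) : R :=
  \sum_(i < m.+1) w 0 (widen_ord (leqnSn m.+1) i) * b 0 i.

Section Dens.
Variables (m : nat) (Gamma : Type) (g : Gamma -> R -> 'rV[R]_m.+2 -> R).

Definition bT (ga : Gamma) (th : param m) (w : 'rV[R]_m.+2) (z y : R) : R :=
  y - xdot w (betaT th) - z * alphaT th - g ga z w * lambdaT th.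
Definition bC (ga : Gamma) (th : param m) (w : 'rV[R]_m.+2) (z y : R) : R :=
  y - xdot w (betaC th) - z * alphaC th - g ga z w * lambdaC th.

Definition dens1 ga th w z y : R :=
  let b1 := bT ga th w z y in let b2 := bC ga th w z y in
  (sigmaT th)^-1 *
  (1 - std_Phi ((b2 - rho th * (sigmaC th / sigmaT th) * b1) /
                (sigmaC th * Num.sqrt (1 - rho th ^+ 2)))) *
  std_phi (b1 / sigmaT th).

Definition dens0 ga th w z y : R :=
  let b1 := bT ga th w z y in let b2 := bC ga th w z y in
  (sigmaC th)^-1 *
  (1 - std_Phi ((b1 - rho th * (sigmaT th / sigmaC th) * b2) /
                (sigmaT th * Num.sqrt (1 - rho th ^+ 2)))) *
  std_phi (b2 / sigmaC th).
End Dens.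

Section Covariates.
Variables (d : measure_display) (T : measurableType d) (P : probability T R).
Variables (m : nat) (Xt : T -> 'rV[R]_m) (Z Wt : T -> R).

(* X = (1, X~^T)^T in R^(m+1) *)
Definition Xvec (o : T) : 'rV[R]_m.+1 :=
  \row_(j < m.+1) match unlift ord0 j with Some k => Xt o 0 k | None => 1 end.
(* W = (X^T, W~)^T in R^(m+2) *)
Definition Wvec (o : T) : 'rV[R]_m.+2 :=
  \row_(i < m.+2) match unlift ord_max i with Some j => Xvec o 0 j | None => Wt o end.

Variables (Gamma : Type) (g : Gamma -> R -> 'rV[R]_m.+2 -> R).

Definition same_subdensities (ga : Gamma) (th : param m)
    (ga' : Gamma) (th' : param m) : Prop :=
  {ae P, forall o, forall y : R,
     dens1 g ga th (Wvec o) (Z o) y = dens1 g ga' th' (Wvec o) (Z o) y /\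
     dens0 g ga th (Wvec o) (Z o) y = dens0 g ga' th' (Wvec o) (Z o) y}.

(* the vector (X~^T, Z, V) with V = g_{gamma*}(Z, W), indexed by 'I_(m+2) *)
Definition XZV (gs : Gamma) (i : 'I_(m + 2)) (o : T) : R :=
  match fintype.split i with
  | inl j => Xt o 0 j
  | inr k => if k == ord0 then Z o else g gs (Z o) (Wvec o)
  end.

Definition cov_matrix (U : 'I_(m + 2) -> T -> R) : 'M[R]_(m + 2) :=
  \matrix_(i, j) fine (covariance P (U i) (U j)).

Definition assumption_A3 (gs : Gamma) : Prop :=
  (forall i, measurable_fun setT (XZV gs i) /\
             P.-integrable setT (fun o => ((XZV gs i o) ^+ 2)%:E)) /\
  cov_matrix (XZV gs) \in unitmx /\
  (measurable_fun setT Wt /\ P.-integrable setT (fun o => (Wt o ^+ 2)%:E) /\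
   0 < fine ('V_P[Wt])).

(* (A5): gamma* is uniquely determined by the distribution of the observed
   data (Y, Delta, W, Z): any parameter (ga, th) of the model generating the
   same observed-data distribution has ga = gamma*.  Since the law of (W,Z)
   is fixed, this is equality of the conditional sub-densities a.e. *)
Definition assumption_A5 (gs : Gamma) (ths : param m) : Prop :=
  forall (ga : Gamma) (th : param m), valid_param th ->
    same_subdensities ga th gs ths -> ga = gs.

End Covariates.
End Model.

(* Main.v *)
Require Import Defs.
From HB Require Import structures.
From mathcomp Require Import all_boot all_order all_algebra.
From mathcomp Require Import all_classical all_reals all_analysis.
From mathcomp Require Import ring lra.
Import Order.TTheory GRing.Theory Num.Theory.
Import measurable_realfun.
Set Implicit Arguments. Unset Strict Implicit. Unset Printing Implicit Defensive.
Local Open Scope classical_set_scope.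
Local Open Scope ring_scope.
Section PhiFacts.
Variable R : realType.
Local Notation N := (normal_prob (0:R) 1).

Lemma N_fin (A : set R) : measurable A -> N A \is a fin_num.
Proof. by move=> mA; apply: fin_num_measure. Qed.

Lemma N_ge0 (A : set R) : 0 <= fine (N A).
Proof. by apply: fine_ge0; apply: measure_ge0. Qed.

Lemma N_le1 (A : set R) : measurable A -> fine (N A) <= 1.
Proof.
move=> mA; rewrite -lee_fin fineK ?N_fin //; exact: probability_le1.
Qed.

Lemma QE (x : R) : 1 - std_Phi x = fine (N `]x, +oo[).
Proof.
have mI : measurable (`]-oo, x] : set R) by exact: measurable_itv.
have -> : N `]x, +oo[ = (1 - N `]-oo, x])%E.
  by rewrite -setCitvl probability_setC.
by rewrite [RHS]fineB // N_fin.
Qed.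

Lemma phiE (x : R) : normal_pdf 0 1 x = normal_peak 1 * expR (- (x ^+ 2) / 2).
Proof.
rewrite /normal_pdf oner_eq0 /= /normal_fun subr0 expr1n.
by congr (_ * expR (_ / _)); rewrite mulr2n.
Qed.

Lemma peak12 : normal_peak (1:R) = 2 * normal_peak 2.
Proof.
rewrite /normal_peak expr1n mul1r.
have e : (2:R) ^+ 2 * pi *+ 2 = 2 ^+ 2 * (pi *+ 2).
  by rewrite -mulrnAr.
rewrite e.
rewrite sqrtrM ?sqrtr_sqr; last by rewrite sqr_ge0.
rewrite ger0_norm // invfM mulrA divff ?mul1r //.
Qed.

Lemma N_tail (A : set R) (x : R) : measurable A ->
  (forall u, A u -> x ^+ 2 <= u ^+ 2) ->
  fine (N A) <= 2 * expR (- (3/8) * x ^+ 2).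
Proof.
move=> mA HA; rewrite -lee_fin fineK ?N_fin //.
rewrite /normal_prob.
apply: (@le_trans _ _ (\int[lebesgue_measure]_(u in A)
   ((2 * expR (- (3/8) * x ^+ 2)) * normal_pdf 0 2 u)%:E)%E).
  apply: ge0_le_integral => //.
  - by move=> u _; rewrite lee_fin normal_pdf_ge0.
  - apply/measurable_EFinP; apply: measurable_funTS; exact: measurable_normal_pdf.
  - apply/measurable_EFinP; apply: measurable_funM => //.
    apply: measurable_funTS; exact: measurable_normal_pdf.
  - move=> u Au; rewrite lee_fin.
    rewrite phiE /normal_pdf (negbTE (_ : (2:R) != 0)) //= /normal_fun subr0 peak12.
    rewrite mulrACA -expRD.
    rewrite ler_pM2l; last by rewrite mulr_gt0 // normal_peak_gt0.
    rewrite ler_expR.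
    have := HA u Au; rewrite (_ : (2:R) ^+ 2 *+ 2 = 8); last first.
      by rewrite -mulr_natr expr2 -!natrM.
    move: (u ^+ 2) (x ^+ 2) => U X h; lra.
under eq_integral do rewrite EFinM.
rewrite ge0_integralZl //.
- rewrite -[X in (_ <= X)%E]mule1; apply: lee_wpmul2l.
    by rewrite lee_fin mulr_ge0 // expR_ge0.
  exact: (@probability_le1 _ _ _ (normal_prob (0:R) 2) A mA).
- apply/measurable_EFinP; apply: measurable_funTS; exact: measurable_normal_pdf.
- by move=> u _; rewrite lee_fin normal_pdf_ge0.
Qed.

End PhiFacts.
Section PhiFacts2.
Variable R : realType.
Local Notation N := (normal_prob (0:R) 1).

Lemma N_itv_pos (x y : R) : x < y -> 0 < fine (N `]x, y]).
Proof.
move=> xy.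
have mI : measurable (`]x, y] : set R) by exact: measurable_itv.
set m := normal_peak (1:R) * expR (- (x ^+ 2 + y ^+ 2) / 2).
have m0 : 0 < m by rewrite mulr_gt0 ?normal_peak_gt0 ?expR_gt0.
have H : ((m * (y - x))%:E <= N `]x, y])%E.
  apply: (@le_trans _ _ (\int[lebesgue_measure]_(u in `]x, y]) cst m%:E u)%E).
    have L : lebesgue_measure (`]x, y] : set R) = (y - x)%:E.
      by rewrite lebesgue_measure_itv /= lte_fin xy -EFinD.
    rewrite integral_cst // EFinM -L; exact: lexx.
  apply: ge0_le_integral => //.
  - by move=> u _; rewrite lee_fin ltW.
  - apply/measurable_EFinP; apply: measurable_funTS; exact: measurable_normal_pdf.
  - move=> u; rewrite /= in_itv /= => /andP[xu uy]; rewrite lee_fin phiE /m.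
    rewrite ler_pM2l ?normal_peak_gt0 // ler_expR.
    have : u ^+ 2 <= x ^+ 2 + y ^+ 2.
      have [u0|u0] := leP 0 u.
        have h1 : u ^+ 2 <= y ^+ 2.
          rewrite ler_sqr ?nnegrE; lra.
        have := sqr_ge0 x; lra.
      have h1 : u ^+ 2 <= x ^+ 2.
        rewrite -(sqrrN u) -(sqrrN x) ler_sqr ?nnegrE; lra.
      have := sqr_ge0 y; lra.
    move: (u ^+ 2) (x ^+ 2 + y ^+ 2) => U V h; lra.
rewrite -lte_fin fineK ?N_fin //.
by apply: lt_le_trans H; rewrite lte_fin mulr_gt0 // subr_gt0.
Qed.

Lemma Phi_lt (x y : R) : x < y -> std_Phi x < std_Phi y.
Proof.
move=> xy.
have mI : measurable (`]-oo, y] : set R) by exact: measurable_itv.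
have mJ : measurable (`]-oo, x] : set R) by exact: measurable_itv.
have E : [set` `]x, y]] = [set` `]-oo, y]] `\` [set` `]-oo, x]].
  apply/seteqP; split => u /=; rewrite !in_itv /=.
    by move=> /andP[xu ->]; split => //; rewrite leNgt xu.
  by move=> [uy /negP]; rewrite -ltNge => ->.
have E2 : [set` `]-oo, y]] `&` [set` `]-oo, x]] = [set` `]-oo, x]].
  apply: setIidr => u /=; rewrite !in_itv /= => ux; lra.
have := N_itv_pos xy; rewrite E measureD // ?E2; last first.
  exact: (le_lt_trans (@probability_le1 _ _ _ N _ mI) (ltry _)).
move=> h; have := h; rewrite (fineB (N_fin mI) (N_fin mJ)) subr_gt0.
by [].
Qed.

Lemma Phi_ge0 (x : R) : 0 <= std_Phi x.
Proof. exact: N_ge0. Qed.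

Lemma Phi_le1 (x : R) : std_Phi x <= 1.
Proof. apply: N_le1; exact: measurable_itv. Qed.

Definition QQ (x : R) := 1 - std_Phi x.

Lemma QQ_le1 x : QQ x <= 1.
Proof. have := Phi_ge0 x; rewrite /QQ; lra. Qed.

Lemma QQ_gt0 x : 0 < QQ x.
Proof.
have h : x < x + 1 by rewrite ltrDl.
have := Phi_lt h; have := Phi_le1 (x + 1).
rewrite /QQ; lra.
Qed.

Lemma QQ_inj x y : QQ x = QQ y -> x = y.
Proof.
rewrite /QQ => e; have [xy|yx|//] := ltgtP x y.
  by have := Phi_lt xy; lra.
by have := Phi_lt yx; lra.
Qed.

Lemma QQ_tail x : 0 <= x -> QQ x <= 2 * expR (- (3/8) * x ^+ 2).
Proof.
move=> x0; rewrite /QQ QE; apply: (@N_tail R); first exact: measurable_itv.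
move=> u; rewrite /= in_itv /= andbT => xu.
rewrite ler_sqr ?nnegrE; lra.
Qed.

Lemma Phi_tail (x : R) : x <= 0 -> std_Phi x <= 2 * expR (- (3/8) * x ^+ 2).
Proof.
move=> x0; apply: (@N_tail R); first exact: measurable_itv.
move=> u; rewrite /= in_itv /= => ux.
rewrite -(sqrrN u) -(sqrrN x) ler_sqr ?nnegrE; lra.
Qed.

Lemma QQ_low x : x <= -2 -> 1/5 <= QQ x.
Proof.
move=> x2.
have x0 : x <= 0 by lra.
have h1 := Phi_tail x0.
have h2 : expR (- (3/8) * x ^+ 2) <= expR (- (3/2) : R).
  rewrite ler_expR.
  have : 4 <= x ^+ 2.
    rewrite -(sqrrN x) (_ : (4:R) = 2 ^+ 2); last by rewrite expr2 -natrM.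
    rewrite ler_sqr ?nnegrE; lra.
  move: (x ^+ 2) => X; lra.
have h3 : expR (- (3/2) : R) <= 2/5.
  rewrite expRN; have := expR_ge1Dx (3/2 : R) => h.
  rewrite -[leLHS]div1r ler_pdivrMr ?expR_gt0 //; lra.
rewrite /QQ; lra.
Qed.

End PhiFacts2.
Section Master.
Variable R : realType.

Lemma eventually_quad (A B C M : R) : (0 < A) \/ (A = 0 /\ 0 < B) ->
  exists Y, forall y, Y <= y -> M < A * y ^+ 2 + B * y + C.
Proof.
case=> [A0|[-> B0]].
  exists (1 + (`|B| + `|C| + `|M|) / A) => y hy.
  have hb := ler_norm B; have hc := ler_norm C.
  have hbn : - B <= `|B| by rewrite -normrN ler_norm.
  have hc' : - C <= `|C| by rewrite -normrN ler_norm.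
  have hm := ler_norm M.
  have hB := normr_ge0 B; have hC := normr_ge0 C; have hM := normr_ge0 M.
  have hq : 0 <= (`|B| + `|C| + `|M|) / A by rewrite divr_ge0 //; lra.
  have y1 : 1 <= y by lra.
  have e : A * (1 + (`|B| + `|C| + `|M|) / A) = A + `|B| + `|C| + `|M|.
    by field; rewrite gt_eqF.
  have h1 : A * (1 + (`|B| + `|C| + `|M|) / A) * y <= A * y * y.
    by apply: ler_wpM2r; [lra | apply: ler_wpM2l; lra].
  rewrite e in h1.
  have h2 : (`|C| + `|M|) <= (`|C| + `|M|) * y.
    by rewrite -[leLHS]mulr1; apply: ler_wpM2l; lra.
  have h3 : - (B * y) <= `|B| * y.
    by rewrite -mulNr; apply: ler_wpM2r; lra.
  have h4 : 0 < A * y by rewrite mulr_gt0 //; lra.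
  rewrite expr2 mulrA; lra.
exists ((`|C| + `|M| + 1) / B) => y hy.
have hc : - C <= `|C| by rewrite -normrN ler_norm.
have hm := ler_norm M.
have : `|C| + `|M| + 1 <= B * y by rewrite -ler_pdivrMl // mulrC.
lra.
Qed.

Lemma QQ_low_aff (a b : R) : a <= 0 ->
  exists k, 0 < k /\ exists Y, forall y, Y <= y -> k <= QQ (a * y + b).
Proof.
move=> a0; have [->|aneg] := eqVneq a 0.
  exists (QQ b); split; first exact: QQ_gt0.
  by exists 0 => y _; rewrite mul0r add0r.
have an : a < 0 by rewrite lt_neqAle aneg.
exists (1/5); split; first by [].
exists ((b + 2) / (- a)) => y hy; apply: QQ_low.
have : b + 2 <= - a * y by rewrite -ler_pdivrMl ?oppr_gt0 // mulrC.
rewrite mulNr; lra.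
Qed.

Lemma core1 (a b a' b' A B C : R) :
  (forall y, QQ (a * y + b) = expR (A * y ^+ 2 + B * y + C) * QQ (a' * y + b')) ->
  a' <= 0 -> (0 < A) \/ (A = 0 /\ 0 < B) -> False.
Proof.
move=> H a0 hAB.
have [k [k0 [Y1 HY1]]] := QQ_low_aff b' a0.
have [Y2 HY2] := eventually_quad C (ln (k^-1)) hAB.
set y := Num.max Y1 Y2.
have y1 : Y1 <= y by rewrite le_max lexx.
have y2 : Y2 <= y by rewrite le_max lexx orbT.
have h1 := HY1 _ y1.
have h2 : k^-1 < expR (A * y ^+ 2 + B * y + C).
  by rewrite -[ltLHS]lnK ?posrE ?invr_gt0 // ltr_expR HY2.
have := QQ_le1 (a * y + b); rewrite H.
have h3 : 1 < expR (A * y ^+ 2 + B * y + C) * k.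
  by rewrite -ltr_pdivrMr // div1r.
have h4 : expR (A * y ^+ 2 + B * y + C) * k <= expR (A * y ^+ 2 + B * y + C) * QQ (a' * y + b').
  by rewrite ler_pM2l ?expR_gt0.
lra.
Qed.

Lemma core2 (a b a' b' B C : R) :
  (forall y, QQ (a * y + b) = expR (B * y + C) * QQ (a' * y + b')) ->
  0 < B -> 0 < a' -> a <= 0 -> False.
Proof.
move=> H B0 a'0 a0.
have [k [k0 [Y1 HY1]]] := QQ_low_aff b a0.
have hq : 0 < (3/8) * a' ^+ 2 by rewrite mulr_gt0 // exprn_gt0.
have [Y2 HY2] := eventually_quad ((3/8) * b' ^+ 2 - C) (- ln (k / 2))
   (or_introl hq : (0 < (3/8) * a' ^+ 2) \/ _) (B := (3/4) * a' * b' - B).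
set y := Num.max Y1 (Num.max Y2 (- b' / a')).
have y1 : Y1 <= y by rewrite le_max lexx.
have y2 : Y2 <= y by rewrite !le_max lexx !orbT.
have y3 : - b' / a' <= y by rewrite !le_max lexx !orbT.
clearbody y.
have t0 : 0 <= a' * y + b'.
  by move: y3; rewrite ler_pdivrMr // => h; lra.
have h1 := HY1 _ y1; rewrite H in h1.
have h2 := QQ_tail t0.
have h3 : expR (B * y + C) * QQ (a' * y + b') <=
          expR (B * y + C) * (2 * expR (- (3 / 8) * (a' * y + b') ^+ 2)).
  by rewrite ler_pM2l ?expR_gt0.
have h4 := HY2 _ y2.
have h5 : expR (B * y + C) * (2 * expR (- (3 / 8) * (a' * y + b') ^+ 2))
          = 2 * expR (- ((3 / 8) * a' ^+ 2 * y ^+ 2 + ((3 / 4) * a' * b' - B) * y +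
                        ((3 / 8) * b' ^+ 2 - C))).
  by rewrite mulrCA -expRD; congr (_ * expR _); field.
have h6 : expR (- ((3 / 8) * a' ^+ 2 * y ^+ 2 + ((3 / 4) * a' * b' - B) * y +
                        ((3 / 8) * b' ^+ 2 - C))) < k / 2.
  rewrite -[ltRHS]lnK ?posrE ?divr_gt0 // ltr_expR; lra.
lra.
Qed.

Lemma core3 (a b a' b' B C : R) :
  (forall y, QQ (a * y + b) = expR (B * y + C) * QQ (a' * y + b')) ->
  B < 0 -> a <= 0 -> False.
Proof.
move=> H B0 a0.
have [k [k0 [Y1 HY1]]] := QQ_low_aff b a0.
have hB : (0:R) = 0 /\ 0 < - B by split => //; rewrite oppr_gt0.
have [Y2 HY2] := eventually_quad (- C) (- ln k) (or_intror hB) (A := 0).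
set y := Num.max Y1 Y2.
have y1 : Y1 <= y by rewrite le_max lexx.
have y2 : Y2 <= y by rewrite le_max lexx orbT.
have h1 := HY1 _ y1; rewrite H in h1.
have h2 := QQ_le1 (a' * y + b').
have h3 : expR (B * y + C) * QQ (a' * y + b') <= expR (B * y + C).
  by rewrite -[leRHS]mulr1 ler_pM2l ?expR_gt0.
have h4 := HY2 _ y2.
have h5 : expR (B * y + C) < k.
  rewrite -[ltRHS]lnK ?posrE // ltr_expR; move: h4; rewrite mul0r add0r mulNr; lra.
lra.
Qed.

Lemma noplus (a b a' b' A B C : R) :
  (forall y, QQ (a * y + b) = expR (A * y ^+ 2 + B * y + C) * QQ (a' * y + b')) ->
  (0 < A) \/ (A = 0 /\ 0 < B) -> False.
Proof.
move=> H hAB.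
have [a'0|a'0] := leP a' 0; first exact: core1 H a'0 hAB.
have H' : forall z, QQ ((- a) * z + b) =
    expR (A * z ^+ 2 + (- B) * z + C) * QQ ((- a') * z + b').
  by move=> z; rewrite !mulNr; have := H (- z); rewrite !mulrN sqrrN.
case: hAB => [A0|[A0 B0]].
  apply: (core1 H') (or_introl A0); lra.
have [a0|a0] := leP a 0.
  apply: (@core2 a b a' b' B C _ B0 a'0 a0) => y.
  by rewrite H A0 mul0r add0r.
apply: (@core3 (- a) b (- a') b' (- B) C _ _ _); last 2 first.
- by rewrite oppr_lt0.
- lra.
by move=> y; rewrite H' A0 mul0r add0r.
Qed.

Lemma master (a b a' b' A B C : R) :
  (forall y, QQ (a * y + b) = expR (A * y ^+ 2 + B * y + C) * QQ (a' * y + b')) ->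
  A = 0 /\ B = 0.
Proof.
move=> H.
have H' : forall y, QQ (a' * y + b') =
    expR ((- A) * y ^+ 2 + (- B) * y + (- C)) * QQ (a * y + b).
  move=> y; rewrite H mulrA -expRD.
  rewrite (_ : (- A) * y ^+ 2 + (- B) * y + (- C) + (A * y ^+ 2 + B * y + C) = 0).
    by rewrite expR0 mul1r.
  by field.
have n1 := noplus H; have n2 := noplus H'.
have [A0|A0|A0] := ltgtP A 0.
- by exfalso; apply: n2; left; rewrite oppr_gt0.
- by exfalso; apply: n1; left.
split=> //.
have [B0|B0|//] := ltgtP B 0.
- by exfalso; apply: n2; right; rewrite A0 oppr0 oppr_gt0.
- by exfalso; apply: n1; right.
Qed.

End Master.
Section Chan.
Variable R : realType.

Lemma chan (s s' m m' a b a' b' : R) : 0 < s -> 0 < s' ->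
  (forall y, s^-1 * (1 - std_Phi (a * y + b)) * std_phi ((y - m) / s) =
             s'^-1 * (1 - std_Phi (a' * y + b')) * std_phi ((y - m') / s')) ->
  s = s' /\ m = m' /\ a = a'.
Proof.
move=> s0 s'0 H.
set A := 1 / (2 * s ^+ 2) - 1 / (2 * s' ^+ 2).
set B := m' / s' ^+ 2 - m / s ^+ 2.
set C := m ^+ 2 / (2 * s ^+ 2) - m' ^+ 2 / (2 * s' ^+ 2) + ln (s / s').
have p0 : 0 < normal_peak (1:R) by rewrite normal_peak_gt0.
have Hm : forall y, QQ (a * y + b) = expR (A * y ^+ 2 + B * y + C) * QQ (a' * y + b').
  move=> y; have := H y; rewrite /std_phi !phiE -/(QQ _) -/(QQ _) => h.
  have E : expR (A * y ^+ 2 + B * y + C) =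
     s / s' * (expR (- ((y - m') / s') ^+ 2 / 2) / expR (- ((y - m) / s) ^+ 2 / 2)).
    rewrite -expRB -[s / s']lnK ?posrE ?divr_gt0 // -expRD.
    by congr expR; rewrite /A /B /C; field; rewrite ?gt_eqF.
  rewrite E.
  set E1 := expR (- ((y - m) / s) ^+ 2 / 2) in h *.
  set E2 := expR (- ((y - m') / s') ^+ 2 / 2) in h *.
  have E10 : 0 < E1 by rewrite expR_gt0.
  transitivity (s^-1 * QQ (a * y + b) * (normal_peak 1 * E1) / (s^-1 * (normal_peak 1 * E1))).
    by field; rewrite ?gt_eqF.
  rewrite h; field; rewrite ?gt_eqF //.
have [A0 B0] := master Hm.
have ss : s = s'.
  have : s ^+ 2 = s' ^+ 2.
    move/eqP: A0; rewrite /A subr_eq0 => /eqP.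
    have two : (2:R) != 0 by rewrite pnatr_eq0.
    by rewrite !div1r => /invr_inj h; exact: (mulfI two h).
  by move/eqP; rewrite eqf_sqr => /orP[/eqP //| /eqP h]; move: s0 s'0; rewrite h; lra.
subst s'.
have mm : m = m'.
  move/eqP: B0; rewrite /B subr_eq0 => /eqP h.
  by apply: (mulIf (_ : (s ^+ 2)^-1 != 0)); rewrite ?invr_eq0 ?sqrf_eq0 ?gt_eqF.
subst m'.
have HQ : forall y, QQ (a * y + b) = QQ (a' * y + b').
  move=> y; have := H y; rewrite -/(QQ _) -/(QQ _) => h.
  have p1 : 0 < std_phi ((y - m) / s) by rewrite /std_phi phiE mulr_gt0 ?expR_gt0.
  apply: (mulIf (_ : std_phi ((y - m) / s) != 0)); first by rewrite gt_eqF.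
  apply: (mulfI (_ : s^-1 != 0)); first by rewrite invr_eq0 gt_eqF.
  by rewrite !mulrA.
have e0 := QQ_inj (HQ 0); have e1 := QQ_inj (HQ 1).
rewrite !mulr0 !add0r in e0; rewrite !mulr1 e0 in e1.
by split => //; split => //; move/addIr: e1.
Qed.

Lemma rho_ident (sT sC r r' : R) : 0 < sT -> 0 < sC ->
  -1 < r < 1 -> -1 < r' < 1 ->
  (1 - r * (sC / sT)) / (sC * Num.sqrt (1 - r ^+ 2)) =
  (1 - r' * (sC / sT)) / (sC * Num.sqrt (1 - r' ^+ 2)) ->
  (1 - r * (sT / sC)) / (sT * Num.sqrt (1 - r ^+ 2)) =
  (1 - r' * (sT / sC)) / (sT * Num.sqrt (1 - r' ^+ 2)) -> r = r'.
Proof.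
move=> sT0 sC0 /andP[r1 r2] /andP[r1' r2'] e1 e2.
have sq (t : R) : -1 < t -> t < 1 -> 0 < 1 - t ^+ 2.
  move=> t1 t2; have h : 0 < (1 - t) * (1 + t) by apply: mulr_gt0; lra.
  by rewrite (_ : 1 - t ^+ 2 = (1 - t) * (1 + t)) //; field.
have q0 := sq r r1 r2; have q0' := sq r' r1' r2'.
move: e1 e2; set D : R := Num.sqrt (1 - r ^+ 2); set D' : R := Num.sqrt (1 - r' ^+ 2) => e1 e2.
have D0 : 0 < D by rewrite sqrtr_gt0.
have D0' : 0 < D' by rewrite sqrtr_gt0.
have DD : D ^+ 2 = 1 - r ^+ 2 by rewrite sqr_sqrtr // ltW.
have DD' : D' ^+ 2 = 1 - r' ^+ 2 by rewrite sqr_sqrtr // ltW.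
clearbody D D'.
have h1 : (sT - r * sC) * D' - (sT - r' * sC) * D = 0.
  transitivity (sT * sC * D * D' * ((1 - r * (sC / sT)) / (sC * D) -
                             (1 - r' * (sC / sT)) / (sC * D'))).
    by field; rewrite ?gt_eqF.
  by rewrite e1 subrr mulr0.
have h2 : (sC - r * sT) * D' - (sC - r' * sT) * D = 0.
  transitivity (sT * sC * D * D' * ((1 - r * (sT / sC)) / (sT * D) -
                             (1 - r' * (sT / sC)) / (sT * D'))).
    by field; rewrite ?gt_eqF.
  by rewrite e2 subrr mulr0.
have h3 : (sT ^+ 2 - sC ^+ 2) * (D' - D) = 0.
  transitivity (sT * ((sT - r * sC) * D' - (sT - r' * sC) * D) -
                sC * ((sC - r * sT) * D' - (sC - r' * sT) * D)).
    by field.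
  by rewrite h1 h2 !mulr0 subrr.
move/eqP: h3; rewrite mulf_eq0 => /orP[|/eqP h4].
  rewrite subr_eq0 eqf_sqr => /orP[/eqP e|/eqP e]; last first.
    by move: sT0 sC0; rewrite e; lra.
  subst sT.
  have h5 : ((1 - r) * D') = ((1 - r') * D).
    apply: (mulfI (_ : sC != 0)); first by rewrite gt_eqF.
    by apply/eqP; rewrite -subr_eq0; apply/eqP; rewrite -h1; field.
  have h6 : (1 - r) * (1 - r') * (2 * (r' - r)) = 0.
    transitivity (((1 - r) * D') ^+ 2 - ((1 - r') * D) ^+ 2).
      by rewrite !exprMn DD DD'; field.
    by rewrite h5 subrr.
  move/eqP: h6; rewrite !mulf_eq0 pnatr_eq0 /= !subr_eq0.
  case/orP => [/orP[]|] /eqP h7; lra.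
have e : D' = D by apply/eqP; rewrite -subr_eq0; apply/eqP.
rewrite e in h1.
have h8 : (r' - r) * (sC * D) = 0 by rewrite -h1; field.
move/eqP: h8; rewrite !mulf_eq0 subr_eq0 (gt_eqF sC0) (gt_eqF D0) /= orbF.
by move/eqP.
Qed.
End Chan.
Section Point.
Variables (R : realType) (m : nat) (Gamma : Type) (g : Gamma -> R -> 'rV[R]_m.+2 -> R).

Definition muT (ga : Gamma) (th : param R m) w z :=
  xdot w (betaT th) + z * alphaT th + g ga z w * lambdaT th.
Definition muC (ga : Gamma) (th : param R m) w z :=
  xdot w (betaC th) + z * alphaC th + g ga z w * lambdaC th.
Definition aT (th : param R m) :=
  (1 - rho th * (sigmaC th / sigmaT th)) / (sigmaC th * Num.sqrt (1 - rho th ^+ 2)).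
Definition aC (th : param R m) :=
  (1 - rho th * (sigmaT th / sigmaC th)) / (sigmaT th * Num.sqrt (1 - rho th ^+ 2)).

Lemma dens1E ga th w z y : dens1 g ga th w z y =
  (sigmaT th)^-1 * (1 - std_Phi (aT th * y +
     (- muC ga th w z + rho th * (sigmaC th / sigmaT th) * muT ga th w z) /
       (sigmaC th * Num.sqrt (1 - rho th ^+ 2)))) *
  std_phi ((y - muT ga th w z) / sigmaT th).
Proof.
rewrite /dens1 /bT /bC /aT /muT /muC.
by congr (_ * (1 - std_Phi _) * std_phi _); ring.
Qed.

Lemma dens0E ga th w z y : dens0 g ga th w z y =
  (sigmaC th)^-1 * (1 - std_Phi (aC th * y +
     (- muT ga th w z + rho th * (sigmaT th / sigmaC th) * muC ga th w z) /
       (sigmaT th * Num.sqrt (1 - rho th ^+ 2)))) *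
  std_phi ((y - muC ga th w z) / sigmaC th).
Proof.
rewrite /dens0 /bT /bC /aC /muT /muC.
by congr (_ * (1 - std_Phi _) * std_phi _); ring.
Qed.

Lemma point (ga : Gamma) (th th' : param R m) w z :
  valid_param th -> valid_param th' ->
  (forall y, dens1 g ga th w z y = dens1 g ga th' w z y) ->
  (forall y, dens0 g ga th w z y = dens0 g ga th' w z y) ->
  [/\ sigmaT th = sigmaT th', sigmaC th = sigmaC th', rho th = rho th',
      muT ga th w z = muT ga th' w z & muC ga th w z = muC ga th' w z].
Proof.
move=> [sT [sC rr]] [sT' [sC' rr']] H1 H0.
have [e1 [e2 e3]] : _ /\ _ /\ _ := chan sT sT' (fun y => etrans (esym (dens1E _ _ _ _ _))
   (etrans (H1 y) (dens1E _ _ _ _ _))).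
have [f1 [f2 f3]] : _ /\ _ /\ _ := chan sC sC' (fun y => etrans (esym (dens0E _ _ _ _ _))
   (etrans (H0 y) (dens0E _ _ _ _ _))).
move: e3 f3; rewrite /aT /aC -e1 -f1 => e3 f3.
by split => //; exact: rho_ident sT sC rr rr' e3 f3.
Qed.

End Point.
Section Cov.
Variables (d : measure_display) (T : measurableType d) (R : realType) (P : probability T R).

Lemma ae_cov (X Y : T -> R) (c : R) : measurable_fun setT X -> measurable_fun setT Y ->
  {ae P, forall o, Y o = c} -> covariance P X Y = 0%E.
Proof.
move=> mX mY hY.
have EY : expectation P Y = c%:E.
  rewrite unlock (ae_eq_integral (cst c%:E)) //.
  - rewrite integral_cst // -[in RHS](mule1 c%:E); congr (_ * _)%E.
    exact: probability_setT.
  - exact: measurableT_comp.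
  - by apply: filterS hY => o /= -> _.
rewrite unlock EY /= unlock.
rewrite (ae_eq_integral (cst 0%E)) //.
- by rewrite integral0.
- apply: measurableT_comp => //; apply: measurable_funM.
    by apply: measurable_funB => //.
  by apply: measurable_funB => //.
- apply: filterS hY => o /= h _.
  by rewrite /GRing.mul /= h subrr mulr0.
Qed.

Lemma Lfun2_of (f : T -> R) : measurable_fun setT f ->
  P.-integrable setT (fun o => (f o ^+ 2)%:E) -> f \in Lfun P 2%:E.
Proof.
move=> mf fi.
rewrite inE; apply/andP; split; first by rewrite inE.
rewrite inE /= /finite_norm.
have two : (2:R) != 0 by rewrite pnatr_eq0.
have h := @poweR_Lnorm _ _ _ P (EFin \o f) 2 two.
have e : (\int[P]_x (`|(EFin \o f) x| `^ 2)%E = \int[P]_x (f x ^+ 2)%:E)%E.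
  apply: eq_integral => x _ /=.
  by rewrite /= powR_mulrn ?normr_ge0 // real_normK // num_real.
move: h; rewrite e => h.
have fin : (\int[P]_x (f x ^+ 2)%:E < +oo)%E.
  move/integrableP: fi => [_].
  by under eq_integral => x _ do rewrite gee0_abs ?lee_fin ?sqr_ge0 //.
have n0 := Lnorm_ge0 P 2%:E (EFin \o f).
move: h n0; case: ('N[P]_2[EFin \o f])%E => [r| |] //= hh _; first by rewrite ltry.
by move: fin; rewrite -hh (negbTE two).
Qed.

Lemma cov_sum n (U : 'I_n -> T -> R) (v : 'I_n -> R) (X : T -> R) :
  X \in Lfun P 2%:E -> (forall j, U j \in Lfun P 2%:E) ->
  forall r : seq 'I_n,
  (fun o => \sum_(j <- r) v j * U j o) \in Lfun P 2%:E /\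
  covariance P X (fun o => \sum_(j <- r) v j * U j o) =
    (\sum_(j <- r) v j * fine (covariance P X (U j)))%:E.
Proof.
move=> HX HU; elim => [|j r [IH1 IH2]].
  have -> : (fun o => \sum_(j <- [::]) v j * U j o) = cst 0.
    by apply: boolp.funext => o; rewrite big_nil.
  by rewrite big_nil covariance_cst_r; split => //; exact: Lfun_cst.
have -> : (fun o => \sum_(i <- j :: r) v i * U i o) =
    ((v j \o* U j) \+ (fun o => \sum_(i <- r) v i * U i o)).
  by apply: boolp.funext => o; rewrite big_cons /= mulrC.
have Pfin : P setT \is a fin_num := fin_num_measure P _ measurableT.
have Hj : (v j \o* U j) \in Lfun P 2%:E by apply: Lfun_scale => //; rewrite ler1n.
have p12 : (1 <= 2%:E :> \bar R)%E by rewrite lee_fin ler1n.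
split; first exact: ((@Lfun_addr_closed _ _ _ P 2%:E p12).2 _ _ Hj IH1).
have X1 := Lfun_subset12 Pfin HX.
have U1 := Lfun_subset12 Pfin (HU j).
have XU1 := Lfun2_mul_Lfun1 HX (HU j).
rewrite covarianceDr // covarianceZr // IH2 big_cons.
have cf := covariance_fin_num X1 U1 XU1.
have E1 : covariance P X (U j) = (fine (covariance P X (U j)))%:E by rewrite fineK.
by rewrite {1}E1 -EFinM -EFinD.
Qed.

Lemma cov_kill n (U : 'I_n -> T -> R) (v : 'cV[R]_n) (c : R) :
  (forall i, U i \in Lfun P 2%:E) ->
  {ae P, forall o, \sum_j v j 0 * U j o = c} ->
  (\matrix_(i, j) fine (covariance P (U i) (U j))) *m v = 0.
Proof.
move=> HU Hae; apply/matrixP => i k; rewrite !mxE (ord1 k).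
have [L C] := cov_sum (fun j => v j 0) (HU i) HU (index_enum 'I_n).
have mS : measurable_fun setT (fun o => \sum_j v j 0 * U j o).
  by move: L; rewrite inE => /andP[]; rewrite inE.
have mU : measurable_fun setT (U i).
  by move: (HU i); rewrite inE => /andP[]; rewrite inE.
have := ae_cov mU mS Hae; rewrite C => /(congr1 fine) /= h.
rewrite -[in RHS]h; apply: eq_bigr => j _.
by rewrite mxE mulrC.
Qed.

End Cov.
Section Lin.
Variables (R : realType) (d : measure_display) (T : measurableType d) (P : probability T R).
Variables (m : nat) (Xt : T -> 'rV[R]_m) (Z Wt : T -> R).
Variables (Gamma : Type) (g : Gamma -> R -> 'rV[R]_m.+2 -> R) (gs : Gamma).

Definition coef (b : 'rV[R]_m.+1) (a l : R) (i : 'I_(m + 2)) : R :=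
  match fintype.split i with
  | inl j => b 0 (lift ord0 j)
  | inr k => if k == ord0 then a else l
  end.

Lemma SL (j : 'I_m) : fintype.split (lshift 2 j) = inl j.
Proof. exact: (@unsplitK m 2 (inl j)). Qed.
Lemma SR (k : 'I_2) : fintype.split (rshift m k) = inr k.
Proof. exact: (@unsplitK m 2 (inr k)). Qed.

Lemma lin_decomp o (b : 'rV[R]_m.+1) (a l : R) :
  xdot (Wvec Xt Wt o) b + Z o * a + g gs (Z o) (Wvec Xt Wt o) * l =
  b 0 ord0 + \sum_i coef b a l i * XZV Xt Z Wt g gs i o.
Proof.
rewrite /xdot.
have W : forall i : 'I_m.+1,
    Wvec Xt Wt o 0 (widen_ord (leqnSn m.+1) i) = Xvec Xt o 0 i.
  move=> i; rewrite /Wvec mxE.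
  have -> : widen_ord (leqnSn m.+1) i = lift ord_max i.
    by apply: val_inj; rewrite [RHS]lift_max.
  by rewrite liftK.
under eq_bigr do rewrite W.
rewrite big_ord_recl /Xvec mxE unlift_none mul1r.
under eq_bigr do rewrite mxE liftK.
rewrite big_split_ord /=.
under [X in _ = _ + (X + _)]eq_bigr do rewrite /coef /XZV SL mulrC.
rewrite big_ord_recl big_ord1 /coef /XZV !SR eqxx.
rewrite (_ : (lift ord0 ord0 == ord0 :> 'I_2) = false) //.
ring.
Qed.

Lemma lin_ident (b b' : 'rV[R]_m.+1) (a a' l l' : R) :
  assumption_A3 P Xt Z Wt g gs ->
  {ae P, forall o, xdot (Wvec Xt Wt o) b + Z o * a + g gs (Z o) (Wvec Xt Wt o) * l =
     xdot (Wvec Xt Wt o) b' + Z o * a' + g gs (Z o) (Wvec Xt Wt o) * l'} ->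
  b = b' /\ a = a' /\ l = l'.
Proof.
move=> [HU [Hinv _]] Hae.
set v : 'cV[R]_(m + 2) := \col_i (coef b a l i - coef b' a' l' i).
have key : {ae P, forall o, \sum_j v j 0 * XZV Xt Z Wt g gs j o = b' 0 ord0 - b 0 ord0}.
  apply: filterS Hae => o; rewrite !lin_decomp => h.
  under eq_bigr do rewrite mxE mulrBl.
  rewrite sumrB; lra.
have L2 : forall i, XZV Xt Z Wt g gs i \in Lfun P 2%:E.
  by move=> i; apply: Lfun2_of; [exact: (HU i).1 | exact: (HU i).2].
have Mv := cov_kill L2 key.
rewrite /cov_matrix in Hinv.
have v0 : v = 0 by rewrite -(mulKmx Hinv v) Mv mulmx0.
have cz : forall i, coef b a l i = coef b' a' l' i.
  move=> i; have := congr1 (fun M : 'cV[R]_(m + 2) => M i 0) v0.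
  rewrite /v !mxE => /eqP.
  by rewrite subr_eq0 => /eqP.
have PF : ProperFilter (almost_everywhere P).
  apply: ae_properfilter_algebraOfSetsType.
  apply: (@lt_le_trans _ _ 1%E); first exact: lte01.
  rewrite le_eqVlt; apply/orP; left; apply/eqP; exact: (esym (probability_setT P)).
have [w ho] := filter_ex key.
rewrite v0 in ho.
have b0 : b 0 ord0 = b' 0 ord0.
  move: ho; rewrite big1 => [h|j _]; last by rewrite mxE mul0r.
  by apply/eqP; rewrite eq_sym -subr_eq0 -h.
split.
  apply/rowP => i; case: (unliftP ord0 i) => [j ->|->]; last exact: b0.
  by have := cz (lshift 2 j); rewrite /coef SL.
have := cz (rshift m ord0); rewrite /coef SR eqxx => ->; split => //.
have := cz (rshift m (lift ord0 ord0)); rewrite /coef SR.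
by rewrite (_ : (lift ord0 ord0 == ord0 :> 'I_2) = false).
Qed.
End Lin.
Unset Implicit Arguments.

Theorem theorem1 (R : realType) (d : measure_display) (T : measurableType d)
    (P : probability T R) (m : nat)
    (Xt : T -> 'rV[R]_m) (Z Wt : T -> R)
    (Gamma : Type) (g : Gamma -> R -> 'rV[R]_m.+2 -> R)
    (ga gs : Gamma) (th ths : param R m) :
  valid_param th -> valid_param ths ->
  assumption_A3 P Xt Z Wt g gs ->
  assumption_A5 P Xt Z Wt g gs ths ->
  same_subdensities P Xt Z Wt g ga th gs ths ->
  ga = gs /\ th = ths.
Proof.
move=> vth vths A3 A5 Hs.
have ega := A5 ga th vth Hs; subst ga; split => //.
have PF : ProperFilter (almost_everywhere P).
  apply: ae_properfilter_algebraOfSetsType.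
  apply: (@lt_le_trans _ _ 1%E); first exact: lte01.
  rewrite le_eqVlt; apply/orP; left; apply/eqP; exact: (esym (probability_setT P)).
have [w Hw] := filter_ex Hs.
have [e1 e2 e3 _ _] := point vth vths (fun y => (Hw y).1) (fun y => (Hw y).2).
have HT : {ae P, forall o,
   xdot (Wvec Xt Wt o) (betaT th) + Z o * alphaT th + g gs (Z o) (Wvec Xt Wt o) * lambdaT th =
   xdot (Wvec Xt Wt o) (betaT ths) + Z o * alphaT ths + g gs (Z o) (Wvec Xt Wt o) * lambdaT ths}.
  apply: filterS Hs => o Ho.
  by have [_ _ _ h _] := point vth vths (fun y => (Ho y).1) (fun y => (Ho y).2).
have HC : {ae P, forall o,
   xdot (Wvec Xt Wt o) (betaC th) + Z o * alphaC th + g gs (Z o) (Wvec Xt Wt o) * lambdaC th =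
   xdot (Wvec Xt Wt o) (betaC ths) + Z o * alphaC ths + g gs (Z o) (Wvec Xt Wt o) * lambdaC ths}.
  apply: filterS Hs => o Ho.
  by have [_ _ _ _ h] := point vth vths (fun y => (Ho y).1) (fun y => (Ho y).2).
have [b1 [a1 l1]] := lin_ident A3 HT.
have [b2 [a2 l2]] := lin_ident A3 HC.
move: e1 e2 e3 b1 a1 l1 b2 a2 l2.
case: (th) => ? ? ? ? ? ? ? ? ?; case: (ths) => ? ? ? ? ? ? ? ? ? /=.
by move=> -> -> -> -> -> -> -> -> ->.
Qed.
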